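(* Let $\Gamma$ be a Deza graph with parameters $(n,k,k-1,a)$, $k>1$, $\beta=1$. Let $x$ be an $A$-vertex and $y$ an $NA$-vertex of $\Gamma$. Then either all possible edges between $\{x,x_b\}$ and $\{y,y_b\}$ are present, or there are no such edges.
   Context: A Deza graph with parameters $(n,k,b,a)$, $a\le b$, is a $k$-regular graph on $n$ vertices in which any two distinct vertices have $a$ or $b$ common neighbours; $\beta$ is the number of vertices $u\ne v$ with exactly $b$ common neighbours with a given vertex $v$ (independent of $v$). Since $\beta=1$, for each vertex $x$ let $x_b$ denote the unique vertex having $b=k-1$ common neighbours with $x$. A vertex $x$ is an $A$-vertex if $x$ is adjacent to $x_b$, and an $NA$-vertex otherwise. *)

(* Defs.v *)
From mathcomp Require Import all_boot.
Set Implicit Arguments. Unset Strict Implicit. Unset Printing Implicit Defensive.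

Definition simple_graph (T : finType) (e : rel T) : Prop :=
  symmetric e /\ irreflexive e.

Definition cn (T : finType) (e : rel T) (x y : T) : nat :=
  #|[set z | e x z && e y z]|.

Definition regular (T : finType) (e : rel T) (k : nat) : Prop :=
  forall x : T, #|[set y | e x y]| = k.

Definition deza (T : finType) (e : rel T) (n k b a : nat) : Prop :=
  [/\ simple_graph e, #|T| = n, regular e k, a <= b &
      forall x y : T, x != y -> cn e x y = a \/ cn e x y = b].

Definition beta_at (T : finType) (e : rel T) (b : nat) (v : T) : nat :=
  #|[set u | (u != v) && (cn e v u == b)]|.

(* xb is the unique vertex having b common neighbours with x *)
Definition is_mate (T : finType) (e : rel T) (b : nat) (x xb : T) : Prop :=
  xb != x /\ cn e x xb = b.

Definition A_vertex (T : finType) (e : rel T) (xb : T -> T) (x : T) : bool :=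
  e x (xb x).

(* Main.v *)
Require Import Defs.
From mathcomp Require Import all_boot.
Set Implicit Arguments. Unset Strict Implicit.

Lemma cn_sym (T : finType) (e : rel T) x y : cn e x y = cn e y x.
Proof. by rewrite /cn; apply: eq_card => z; rewrite !inE andbC. Qed.

Lemma priv1 (T : finType) (e : rel T) k u w p q :
  regular e k -> 0 < k -> cn e u w = k.-1 ->
  e u p -> ~~ e w p -> e u q -> ~~ e w q -> p = q.
Proof.
move=> reg k0 cuw up wp uq wq.
set B := [set z | e u z]; set A := [set z | e u z && e w z].
have sAB : A \subset B by apply/subsetP => z; rewrite !inE => /andP[].
have c1 : #|B :\: A| = 1.
  have := cardsD B A; rewrite (setIidPr sAB) => ->.
  have cA : #|A| = k.-1 := cuw.
  rewrite [#|B|]reg cA; by case: (k) k0 => // m _; rewrite succnK subSnn.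
have /eqP/cards1P [z hz] := c1.
have pin : p \in B :\: A by rewrite !inE up (negbTE wp).
have qin : q \in B :\: A by rewrite !inE uq (negbTE wq).
by move: pin qin; rewrite hz !inE => /eqP -> /eqP ->.
Qed.

Lemma uniq_mate (T : finType) (e : rel T) b v u u' :
  beta_at e b v = 1 -> u != v -> cn e v u = b -> u' != v -> cn e v u' = b ->
  u = u'.
Proof.
move=> hb uv cu u'v cu'.
have /eqP/cards1P [z hz] := hb.
have h1 : u \in [set u | (u != v) && (cn e v u == b)] by rewrite inE uv cu eqxx.
have h2 : u' \in [set u | (u != v) && (cn e v u == b)] by rewrite inE u'v cu' eqxx.
by move: h1 h2; rewrite hz !inE => /eqP -> /eqP ->.
Qed.

Unset Implicit Arguments.

Theorem lemma4 (T : finType) (e : rel T) (n k a : nat) (xb : T -> T) :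
  deza e n k k.-1 a -> 1 < k ->
  (forall v : T, beta_at e k.-1 v = 1) ->
  (forall v : T, is_mate e k.-1 v (xb v)) ->
  forall x y : T, A_vertex e xb x -> ~~ A_vertex e xb y ->
  (forall u v, u \in [:: x; xb x] -> v \in [:: y; xb y] -> e u v) \/
  (forall u v, u \in [:: x; xb x] -> v \in [:: y; xb y] -> ~~ e u v).
Proof.
move=> [[esym eirr] _ reg _ _] k1 hbeta hmate x y Ax NAy.
have k0 : 0 < k by apply: ltnW.
rewrite /A_vertex in Ax NAy.
have invol : forall v, xb (xb v) = v.
  move=> v; have [m1 c1] := hmate v; have [m2 c2] := hmate (xb v).
  have c1' : cn e (xb v) v = k.-1 by rewrite cn_sym.
  have m1' : v != xb v by rewrite eq_sym.
  exact: (uniq_mate (hbeta (xb v)) m2 c2 m1' c1').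
have [mx cx] := hmate x; have [my cy] := hmate y.
have cx' : cn e (xb x) x = k.-1 by rewrite cn_sym.
have cy' : cn e (xb y) y = k.-1 by rewrite cn_sym.
have Axb : e (xb x) (xb (xb x)) by rewrite invol esym.
have NAyb : ~~ e (xb y) (xb (xb y)) by rewrite invol esym.
have yx : y != x by apply/eqP => E; move: NAy; rewrite E Ax.
have yxb : y != xb x by apply/eqP => E; move: NAy; rewrite E Axb.
have ybx : xb y != x by apply/eqP => E; move: NAyb; rewrite E Ax.
have ybxb : xb y != xb x by apply/eqP => E; move: NAyb; rewrite E Axb.
have same : forall v, v != x -> v != xb x -> e x v = e (xb x) v.
  move=> v vx vxb; apply/idP/idP => h; apply/negPn/negP => h'.
  - have := priv1 reg k0 cx Ax (negbT (eirr (xb x))) h h'.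
    by move=> E; move: vxb; rewrite E eqxx.
  - have Axb' : e (xb x) x by rewrite esym.
    have := priv1 reg k0 cx' Axb' (negbT (eirr _)) h h'.
    by move=> E; move: vx; rewrite E eqxx.
have s1 := same y yx yxb.
have s2 := same (xb y) ybx ybxb.
have mx' : x != xb x by rewrite eq_sym.
case E1: (e x y); case E2: (e x (xb y)).
- left => u v; rewrite !inE => /orP[]/eqP-> /orP[]/eqP->;
  by rewrite -?s1 -?s2 ?E1 ?E2.
- exfalso; move/negP: mx'; apply; apply/eqP.
  apply: (priv1 reg k0 cy (u:=y) (w:=xb y)).
  + by rewrite esym.
  + by rewrite esym E2.
  + by rewrite esym -s1.
  + by rewrite esym -s2 E2.
- exfalso; move/negP: mx'; apply; apply/eqP.
  apply: (priv1 reg k0 cy' (u:=xb y) (w:=y)).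
  + by rewrite esym.
  + by rewrite esym E1.
  + by rewrite esym -s2.
  + by rewrite esym -s1 E1.
- right => u v; rewrite !inE => /orP[]/eqP-> /orP[]/eqP->;
  by rewrite -?s1 -?s2 ?E1 ?E2.
Qed.
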